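(* Let $V:S^1\to\mathbb R$ be continuous and odd, and for $D\ge0$ let $c_k=-(2\pi k)^2D+4\pi k v_k$ with $v_k=\int_0^{1/2}V(\theta)\sin(2\pi k\theta)\,d\theta$. (a) If $V>0$ on $\left]0,\tfrac12\right[$, then $c_1>0$ for all sufficiently small $D\ge 0$. (b) Suppose there is $\theta_0\in\left]0,\tfrac12\right[$ such that $V>0$ on $\left]0,\theta_0\right[$, $V(\theta_0)=0$, $V<0$ on $\left]\theta_0,\tfrac12\right[$, and $V(\theta)\ge V(\tfrac12-\theta)$ for all $\theta\in\left]\min(\theta_0,\tfrac12-\theta_0),\tfrac14\right[$. Then $c_2>0$ for all sufficiently small $D\ge0$.
   Context: $S^1=\mathbb R/\mathbb Z$; a function on $S^1$ is identified with a 1-periodic function on $\mathbb R$. The numbers $c_k$ are the eigenvalues of the linearization of the equation $\partial_t f=D\partial_\theta^2 f+\partial_\theta((V*f)f)$, $(V*f)(\theta)=\int_{S^1}V(\theta-\psi)f(\psi)d\psi$, around the constant solution $f\equiv1$. *)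

(* Defs.v *)
From Stdlib Require Import Reals.
Open Scope R_scope.

Definition vk_integrand (V : R -> R) (k : nat) : R -> R :=
  fun t => V t * sin (2 * PI * INR k * t).

Definition ck (D : R) (k : nat) (vk : R) : R :=
  - (2 * PI * INR k) ^ 2 * D + 4 * PI * INR k * vk.

(* Main.v *)
Require Import Defs.
From Stdlib Require Import Reals Lra Lia.
From Coquelicot Require Import Coquelicot.
Open Scope R_scope.

Lemma ck_pos (k : nat) (v : R) : (0 < k)%nat -> v > 0 ->
  exists D0, D0 > 0 /\ forall D, 0 <= D < D0 -> ck D k v > 0.
Proof.
  intros Hk Hv.
  assert (Ha : 0 < PI * INR k).
  { apply Rmult_lt_0_compat. apply PI_RGT_0. apply lt_0_INR. lia. }
  exists (v / (PI * INR k)). split.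
  - apply Rdiv_lt_0_compat; lra.
  - intros D [HD1 HD2]. unfold ck.
    set (a := PI * INR k) in *.
    assert (a * D < v).
    { apply (Rmult_lt_compat_l a) in HD2; [|lra].
      replace (a * (v / a)) with v in HD2 by (field; lra). lra. }
    replace (- (2 * PI * INR k) ^ 2 * D + 4 * PI * INR k * v)
      with (4 * a * (v - a * D)) by (unfold a; ring).
    apply Rmult_lt_0_compat; lra.
Qed.

Lemma contV (V : R -> R) : continuity V -> forall x, continuous V x.
Proof. intros H x. apply continuity_pt_filterlim. apply H. Qed.

Lemma cont_sin (c : R) : forall x, continuous (fun t => sin (c * t)) x.
Proof. intros x. apply (@ex_derive_continuous R_AbsRing R_NormedModule). auto_derive. auto. Qed.

Lemma cont_g (V : R -> R) (c : R) : continuity V ->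
  forall x, continuous (fun t => V t * sin (c * t)) x.
Proof.
  intros H x. apply (continuous_mult V (fun t => sin (c * t))).
  apply contV; auto. apply cont_sin.
Qed.

Lemma cont_h (V : R -> R) (c : R) : continuity V ->
  forall x, continuous (fun t => V (1/2 - t) * sin (c * t)) x.
Proof.
  intros H x. apply (continuous_mult (fun t => V (1/2 - t)) (fun t => sin (c * t))).
  apply (continuous_comp (fun t => 1/2 - t) V).
  apply (@ex_derive_continuous R_AbsRing R_NormedModule). auto_derive. auto. apply contV; auto. apply cont_sin.
Qed.

Lemma exR (f : R -> R) a b : (forall x, continuous f x) -> ex_RInt f a b.
Proof. intros H. apply (@ex_RInt_continuous R_CompleteNormedModule). intros; apply H. Qed.

Theorem mainTheorem3 (V : R -> R)
  (HVcont : continuity V)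
  (HVper : forall x, V (x + 1) = V x)
  (HVodd : forall x, V (- x) = - V x)
  (pr1 : Riemann_integrable (vk_integrand V 1) 0 (1/2))
  (pr2 : Riemann_integrable (vk_integrand V 2) 0 (1/2)) :
  ((forall t, 0 < t < 1/2 -> V t > 0) ->
     exists D0, D0 > 0 /\
       forall D, 0 <= D < D0 -> ck D 1 (RiemannInt pr1) > 0)
  /\
  (forall theta0, 0 < theta0 < 1/2 ->
     (forall t, 0 < t < theta0 -> V t > 0) ->
     V theta0 = 0 ->
     (forall t, theta0 < t < 1/2 -> V t < 0) ->
     (forall t, Rmin theta0 (1/2 - theta0) < t < 1/4 -> V t >= V (1/2 - t)) ->
     exists D0, D0 > 0 /\
       forall D, 0 <= D < D0 -> ck D 2 (RiemannInt pr2) > 0).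
Proof.
  split.
  - intros Hpos. apply ck_pos. lia.
    rewrite <- RInt_Reals. apply RInt_gt_0. lra.
    + intros x Hx. unfold vk_integrand. apply Rmult_lt_0_compat.
      apply Hpos; auto. apply sin_gt_0; simpl; pose proof PI_RGT_0; nra.
    + intros x _. apply cont_g; auto.
  - intros th Hth Hp H0 Hn Hsym. apply ck_pos. lia.
    rewrite <- RInt_Reals.
    set (g := vk_integrand V 2).
    assert (Hg : forall x, continuous g x) by (apply cont_g; auto).
    set (k := fun t => V (1/2 - t) * sin (2 * PI * INR 2 * t)).
    assert (Hk : forall x, continuous k x) by (apply cont_h; auto).
    rewrite <- (RInt_Chasles g 0 (1/4) (1/2)) by (apply exR; auto).
    assert (E : RInt g (1/4) (1/2) = - RInt k 0 (1/4)).
    { replace (1/4) with (-1 * (1/4) + 1/2) at 1 by field.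
      replace (1/2) with (-1 * 0 + 1/2) at 2 by field.
      rewrite <- RInt_comp_lin by (apply exR; auto).
      rewrite <- opp_RInt_swap.
      2:{ apply exR. intros x. apply (continuous_scal_r (-1) (fun y => g (-1 * y + 1/2))).
          apply (continuous_comp (fun y => -1 * y + 1/2) g).
          apply (@ex_derive_continuous R_AbsRing R_NormedModule). auto_derive. auto. auto. }
      unfold opp; simpl. f_equal.
      apply RInt_ext. intros x _. unfold g, k, vk_integrand, scal; simpl.
      unfold mult; simpl.
      assert (Ee : 2 * PI * (1 + 1) * (-1 * x + 1 / 2) =
        - (2 * PI * (1 + 1) * x) + 2 * INR 1 * PI) by (rewrite INR_1; field).
      rewrite Ee, sin_period, sin_neg.
      replace (-1 * x + 1/2) with (1/2 - x) by field. field. }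
    rewrite E. unfold plus; simpl.
    set (m := Rmin th (1/2 - th)).
    assert (Hm1 : m <= th) by apply Rmin_l.
    assert (Hm2 : m <= 1/2 - th) by apply Rmin_r.
    assert (Hm0 : 0 < m) by (unfold m, Rmin; destruct Rle_dec; lra).
    assert (Hm4 : m <= 1/4) by lra.
    replace (RInt g 0 (1/4) + - RInt k 0 (1/4)) with
      (RInt (fun x => minus (g x) (k x)) 0 (1/4)).
    2:{ rewrite (RInt_minus g k) by (apply exR; auto). reflexivity. }
    assert (Hc : forall x, continuous (fun x => minus (g x) (k x)) x).
    { intros x; apply (@continuous_minus R_UniformSpace R_AbsRing R_NormedModule); auto. }
    rewrite <- (RInt_Chasles _ 0 m (1/4)) by (apply exR; auto).
    unfold plus; simpl.
    assert (Hs : forall x, 0 < x < 1/4 -> 0 < sin (2 * PI * INR 2 * x)).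
    { intros x Hx. apply sin_gt_0; simpl; pose proof PI_RGT_0; nra. }
    assert (A : 0 < RInt (fun x => minus (g x) (k x)) 0 m).
    { apply RInt_gt_0; auto. intros x Hx.
      unfold g, k, vk_integrand, minus, plus, opp; simpl.
      assert (V x > 0) by (apply Hp; lra).
      assert (V (1/2 - x) < 0) by (apply Hn; lra).
      assert (0 < sin (2 * PI * (1 + 1) * x)) by (apply (Hs x); lra).
      nra. }
    assert (B : 0 <= RInt (fun x => minus (g x) (k x)) m (1/4)).
    { apply RInt_ge_0; auto. apply exR; auto. intros x Hx.
      unfold g, k, vk_integrand, minus, plus, opp; simpl.
      assert (V x >= V (1/2 - x)) by (apply Hsym; unfold m in Hx; lra).
      assert (0 < sin (2 * PI * (1 + 1) * x)) by (apply (Hs x); lra).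
      nra. }
    lra.
Qed.
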